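(* Let $R$ be a commutative ring in which $2$ is invertible, let $M$ be a quadratic $R$-space, and let $\alpha\in\mathrm{TransO}(M,\langle\,,\,\rangle)$. Then there exists $\beta(X)\in\mathrm{TransO}(M[X],\langle\,,\,\rangle)$ such that $\beta(1)=\alpha$ and $\beta(0)=\mathrm{Id}$.
   Context: A quadratic space is a finitely generated projective module $M$ with quadratic form $q$ whose bilinear form $\langle x,y\rangle=q(x+y)-q(x)-q(y)$ is non-degenerate. $M[X]=M\otimes_RR[X]$ is the quadratic space over $R[X]$ obtained by extension of scalars, and $\beta(c)$ for $c\in R$ denotes the specialization $X\mapsto c$. ESD transvections on a quadratic space $N$ (over any such ring): for $u,v\in N$ with $u$ unimodular, $q(u)=0$, $\langle u,v\rangle=0$, $r=q(v)$, $\sigma_{u,v}(x)=x+\langle v,x\rangle u-\langle u,x\rangle v-r\langle u,x\rangle u$; $\mathrm{TransO}(N,\langle\,,\,\rangle)$ is the group generated by all of them. *)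

(* Defs.v *)
From HB Require Import structures.
From mathcomp Require Import all_boot all_order all_algebra.
Set Implicit Arguments. Unset Strict Implicit. Unset Printing Implicit Defensive.
Import GRing.Theory.
Local Open Scope ring_scope.

(* A finitely generated projective R-module M is represented (up to
   isomorphism) as the image of an idempotent matrix P : 'M_n acting on row
   vectors: M = { x : 'rV_n | x *m P = x }.  A quadratic form q on M is
   represented by a matrix A with q x = x A x^T (every quadratic form on M is
   of this shape: extend it to R^n through the projection x |-> x *m P). *)

Section QuadSpace.
Variables (R : comRingType) (n : nat) (P A : 'M[R]_n).

Definition inM (x : 'rV[R]_n) : bool := x *m P == x.

Definition qf (x : 'rV[R]_n) : R := (x *m A *m x^T) 0 0.

(* polar bilinear form <x,y> = q(x+y) - q(x) - q(y) *)
Definition bil (x y : 'rV[R]_n) : R := (x *m (A + A^T) *m y^T) 0 0.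

(* linear functionals on M are exactly the y |-> (y *m c) 0 0, c : 'cV_n *)
Definition quad_space : Prop :=
  [/\ P *m P = P,
      (forall x, inM x -> (forall y, inM y -> bil x y = 0) -> x = 0) &
      (forall c : 'cV[R]_n, exists x, inM x /\
          forall y, inM y -> bil x y = (y *m c) 0 0)].

Definition unimodular (u : 'rV[R]_n) : Prop :=
  exists c : 'cV[R]_n, (u *m c) 0 0 = 1.

Definition admissible (u v : 'rV[R]_n) : Prop :=
  [/\ inM u, inM v, unimodular u, qf u = 0 & bil u v = 0].

Definition esd (u v : 'rV[R]_n) (x : 'rV[R]_n) : 'rV[R]_n :=
  x + bil v x *: u - bil u x *: v - (qf v * bil u x) *: u.

(* TransO(M) : subgroup (of the maps M -> M, compared on M) generated by the
   ESD transvections. *)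
Inductive TransO : ('rV[R]_n -> 'rV[R]_n) -> Prop :=
| TransO_gen u v : admissible u v -> TransO (esd u v)
| TransO_id : TransO id
| TransO_comp g h : TransO g -> TransO h -> TransO (g \o h)
| TransO_inv g h : TransO g -> (forall x, inM x -> inM (h x)) ->
    (forall x, inM x -> h (g x) = x) -> (forall x, inM x -> g (h x) = x) ->
    TransO h
| TransO_ext g h : TransO g -> (forall x, inM x -> g x = h x) -> TransO h.

End QuadSpace.

Definition polyX_mx (R : comRingType) (m k : nat) (B : 'M[R]_(m, k))
  : 'M[{poly R}]_(m, k) := map_mx polyC B.

Definition specialize (R : comRingType) (n : nat)
  (beta : 'rV[{poly R}]_n -> 'rV[{poly R}]_n) (c : R) (x : 'rV[R]_n)
  : 'rV[R]_n := map_mx (fun p => p.[c]) (beta (polyX_mx x)).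

(* Main.v *)
Require Import Defs.
From HB Require Import structures.
From mathcomp Require Import all_boot all_order all_algebra.
From mathcomp Require Import ring.
Import GRing.Theory.
Local Open Scope ring_scope.

Section Gen.
Variables (S : comRingType) (n : nat) (P A : 'M[S]_n).

Lemma trmx11 (a : 'M[S]_1) : a^T 0 0 = a 0 0.
Proof. by rewrite mxE. Qed.

Lemma trD (y z : 'rV[S]_n) : (y + z)^T = y^T + z^T.
Proof. by apply/matrixP => i j; rewrite !mxE. Qed.
Lemma trZ c (y : 'rV[S]_n) : (c *: y)^T = c *: y^T.
Proof. by apply/matrixP => i j; rewrite !mxE. Qed.
Lemma trN (y : 'rV[S]_n) : (- y)^T = - y^T.
Proof. by apply/matrixP => i j; rewrite !mxE. Qed.
Lemma NmT : (A + A^T)^T = A + A^T.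
Proof. by apply/matrixP => i j; rewrite !mxE addrC. Qed.
Lemma bilD x y z : bil A x (y + z) = bil A x y + bil A x z.
Proof. by rewrite /bil trD mulmxDr mxE. Qed.
Lemma bilZ x c y : bil A x (c *: y) = c * bil A x y.
Proof. by rewrite /bil trZ -scalemxAr mxE. Qed.
Lemma bilN x y : bil A x (- y) = - bil A x y.
Proof. by rewrite /bil trN mulmxN mxE. Qed.
Lemma bilB x y z : bil A x (y - z) = bil A x y - bil A x z.
Proof. by rewrite bilD bilN. Qed.
Lemma bil_sym x y : bil A x y = bil A y x.
Proof.
rewrite /bil -trmx11 !trmx_mul trmxK NmT.
by rewrite mulmxA.
Qed.
Lemma bilNl x y : bil A (- x) y = - bil A x y.
Proof. by rewrite bil_sym bilN bil_sym. Qed.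
Lemma bil0l y : bil A 0 y = 0.
Proof. by rewrite /bil !mul0mx mxE. Qed.
Lemma bil_diag w : bil A w w = qf A w + qf A w.
Proof.
rewrite /bil /qf mulmxDr mulmxDl mxE; congr (_ + _).
by rewrite -[LHS]trmx11 !trmx_mul !trmxK mulmxA.
Qed.
Lemma qfN w : qf A (- w) = qf A w.
Proof. by rewrite /qf trN mulNmx mulmxN mulNmx opprK. Qed.
Lemma qf0 : qf A 0 = 0.
Proof. by rewrite /qf !mul0mx mxE. Qed.

Lemma esd_inv u w y : qf A u = 0 -> bil A u w = 0 ->
  esd A u (- w) (esd A u w y) = y.
Proof.
move=> qu buw.
have buu : bil A u u = 0 by rewrite bil_diag qu addr0.
have bwu : bil A w u = 0 by rewrite bil_sym.
have h1 : bil A u (esd A u w y) = bil A u y.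
  by rewrite /esd !bilB bilD !bilZ buu buw; ring.
have h2 : bil A (- w) (esd A u w y) = - bil A w y + (qf A w + qf A w) * bil A u y.
  by rewrite bilNl /esd !bilB bilD !bilZ bwu bil_diag; ring.
rewrite [esd A u (- w) _]/esd h1 h2 qfN /esd.
apply/rowP => j; rewrite !mxE; ring.
Qed.

Lemma esd_inM u v x : inM P u -> inM P v -> inM P x -> inM P (esd A u v x).
Proof.
rewrite /inM /esd => /eqP hu /eqP hv /eqP hx.
by rewrite !mulmxBl !mulmxDl -!scalemxAl hu hv hx.
Qed.

Lemma TransO_inM g : TransO P A g -> forall x, inM P x -> inM P (g x).
Proof.
elim=> //.
- by move=> u v [hu hv _ _ _] x hx; apply: esd_inM.
- by move=> g1 h1 _ IH1 _ IH2 x hx /=; apply: IH1; apply: IH2.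
- by move=> g1 h1 _ IH E x hx; rewrite -E //; apply: IH.
Qed.

Definition Nm := A + A^T.
Definition esd_mx (u v : 'rV[S]_n) : 'M[S]_n :=
  1%:M + Nm^T *m v^T *m u - Nm^T *m u^T *m v - qf A v *: (Nm^T *m u^T *m u).

Lemma row11 (a : 'M[S]_1) (u : 'rV[S]_n) : a *m u = a 0 0 *: u.
Proof. by rewrite {1}[a]mx11_scalar mul_scalar_mx. Qed.

Lemma esd_mxE u v x : x *m esd_mx u v = esd A u v x.
Proof.
rewrite /esd_mx /esd !mulmxDr !mulmxN mulmx1 -scalemxAr !mulmxA !row11.
have E : forall z : 'rV[S]_n, (x *m Nm^T *m z^T) 0 0 = bil A z x.
  by move=> z; rewrite /bil -[RHS]trmx11 !trmx_mul !trmxK mulmxA.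
by rewrite !E scalerA.
Qed.

End Gen.
Arguments esd_mx {S n} A u v.
Arguments TransO_inM {S n P A g}.
Arguments esd_inv {S n A u w}.
Arguments esd_mxE {S n A u v x}.

Section Map.
Variables (S T : comRingType) (f : {rmorphism S -> T}) (n : nat).

Lemma mapT m k (B : 'M[S]_(m, k)) : map_mx f B^T = (map_mx f B)^T.
Proof. by apply/matrixP => i j; rewrite !mxE. Qed.
Lemma qf_map (A : 'M[S]_n) v : qf (map_mx f A) (map_mx f v) = f (qf A v).
Proof. by rewrite /qf -mapT -!map_mxM mxE. Qed.
Lemma bil_map (A : 'M[S]_n) u v : bil (map_mx f A) (map_mx f u) (map_mx f v) = f (bil A u v).
Proof. by rewrite /bil -!mapT -map_mxD -!map_mxM mxE. Qed.
Lemma map_esd (A : 'M[S]_n) u v :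
  map_mx f (esd_mx A u v) = esd_mx (map_mx f A) (map_mx f u) (map_mx f v).
Proof.
rewrite /esd_mx /Nm map_mxB map_mxB map_mxD map_mx1 map_mxZ !map_mxM !mapT map_mxD mapT qf_map.
done.
Qed.
End Map.

Section Main.
Variables (R : comUnitRingType) (n : nat) (P A : 'M[R]_n).

Local Notation PX := (polyX_mx P).
Local Notation AX := (polyX_mx A).
Definition ev (c : R) m k (B : 'M[{poly R}]_(m, k)) := map_mx (horner_eval c) B.
Arguments ev c {m k} B.

Lemma ev_polyX c m k (B : 'M[R]_(m, k)) : ev c (polyX_mx B) = B.
Proof. by apply/matrixP => i j; rewrite !mxE /horner_eval hornerC. Qed.

Lemma ev_polyX' c m k (B : 'M[R]_(m, k)) : map_mx (horner_eval c) (polyX_mx B) = B.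
Proof. exact: ev_polyX. Qed.
Lemma evZX c (v : 'rV[R]_n) : map_mx (horner_eval c) ('X *: polyX_mx v) = c *: v.
Proof. by apply/matrixP => i j; rewrite !mxE /horner_eval mulrC hornerCM hornerX mulrC. Qed.
Lemma ev_esd c u v : ev c (esd_mx AX (polyX_mx u) ('X *: polyX_mx v)) = esd_mx A u (c *: v).
Proof. by rewrite /ev map_esd !ev_polyX' evZX. Qed.

Lemma specE c (B : 'M[{poly R}]_n) x :
  specialize (fun y => y *m B) c x = x *m ev c B.
Proof.
rewrite /specialize (_ : (fun p => p.[c]) = horner_eval c) //.
by rewrite map_mxM -/(ev c _) ev_polyX.
Qed.

Lemma polyX_inM x : inM P x -> inM PX (polyX_mx x).
Proof. by rewrite /inM /polyX_mx -map_mxM => /eqP ->. Qed.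

Lemma evM c m k l (B1 : 'M_(m, k)) (B2 : 'M_(k, l)) : ev c (B1 *m B2) = ev c B1 *m ev c B2.
Proof. exact: map_mxM. Qed.

Definition good (alpha : 'rV[R]_n -> 'rV[R]_n) (B Bi : 'M[{poly R}]_n) : Prop :=
  [/\ TransO PX AX (fun y => y *m B), TransO PX AX (fun y => y *m Bi),
      (forall y, inM PX y -> y *m B *m Bi = y /\ y *m Bi *m B = y),
      (forall x, inM P x -> x *m ev 1 B = alpha x) &
      (forall x, inM P x -> x *m ev 0 B = x)].

Lemma evinv c B Bi x : (forall y, inM PX y -> y *m B *m Bi = y /\ y *m Bi *m B = y) ->
  inM P x -> x *m ev c B *m ev c Bi = x.
Proof.
move=> H hx; have [H1 _] := H _ (polyX_inM _ hx).
by have := congr1 (ev c) H1; rewrite !evM ev_polyX.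
Qed.

Lemma key alpha : TransO P A alpha -> exists B Bi, good alpha B Bi.
Proof.
elim.
- move=> u v [hu hv [c hc] qu buv].
  set u' := polyX_mx u; set w := 'X *: polyX_mx v.
  have huX : inM PX u' by apply: polyX_inM.
  have hwX : inM PX w by rewrite /inM -scalemxAl (eqP (polyX_inM _ hv)).
  have hnwX : inM PX (- w) by rewrite /inM mulNmx (eqP hwX).
  have quX : qf AX u' = 0 by rewrite /u' qf_map qu rmorph0.
  have bX : bil AX u' w = 0.
    by rewrite bilZ /u' bil_map buv rmorph0 mulr0.
  have unX : unimodular u'.
    by exists (polyX_mx c); rewrite /u' -map_mxM mxE hc.
  exists (esd_mx AX u' w), (esd_mx AX u' (- w)); split.
  + apply: (TransO_ext (g := esd AX u' w)); first by apply: TransO_gen.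
    by move=> x _; rewrite esd_mxE.
  + apply: (TransO_ext (g := esd AX u' (- w))).
      by apply: TransO_gen; split => //; rewrite bilN bX oppr0.
    by move=> x _; rewrite esd_mxE.
  + move=> y _; rewrite !esd_mxE; split; first exact: esd_inv.
    have := @esd_inv _ _ AX u' (- w) y quX.
    by rewrite opprK bilN bX oppr0 => ->.
  + move=> x _; rewrite ev_esd.
    by rewrite scale1r esd_mxE.
  + move=> x _; rewrite ev_esd.
    by rewrite scale0r esd_mxE /esd bil0l qf0 scaler0 scale0r mul0r scale0r !subr0 addr0.
- exists 1%:M, 1%:M; split.
  + by apply: (TransO_ext (g := id)); [apply: TransO_id | move=> x _; rewrite mulmx1].
  + by apply: (TransO_ext (g := id)); [apply: TransO_id | move=> x _; rewrite mulmx1].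
  + by move=> y _; rewrite !mulmx1.
  + by move=> x _; rewrite /ev map_mx1 mulmx1.
  + by move=> x _; rewrite /ev map_mx1 mulmx1.
- move=> g h _ [Bg [Bgi [Tg Tgi Ig E1g E0g]]] Th [Bh [Bhi [Th' Thi Ih E1h E0h]]].
  exists (Bh *m Bg), (Bgi *m Bhi); split.
  + apply: (TransO_ext (TransO_comp Tg Th')) => y _ /=; by rewrite mulmxA.
  + apply: (TransO_ext (TransO_comp Thi Tgi)) => y _ /=; by rewrite mulmxA.
  + move=> y hy; have hy1 := TransO_inM Th' _ hy; have hy2 := TransO_inM Tgi _ hy.
    split.
    * rewrite !mulmxA.
      by rewrite (proj1 (Ig _ hy1)) (proj1 (Ih _ hy)).
    * rewrite !mulmxA.
      by rewrite (proj2 (Ih _ hy2)) (proj2 (Ig _ hy)).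
  + move=> x hx; rewrite evM mulmxA E1h // E1g //; exact: TransO_inM Th _ hx.
  + by move=> x hx; rewrite evM mulmxA E0h // E0g.
- move=> g h Tg [B [Bi [TB TBi I E1 E0]]] hpres hgh hhg.
  exists Bi, B; split => //.
  + by move=> y hy; have [? ?] := I y hy.
  + move=> x hx; rewrite -{1}(hhg x hx) -E1; last exact: hpres.
    exact: (@evinv 1 B Bi (h x) I (hpres _ hx)).
  + move=> x hx; rewrite -{1}(E0 x hx); exact: (@evinv 0 B Bi x I hx).
- move=> g h _ [B [Bi [TB TBi I E1 E0]]] E.
  by exists B, Bi; split => // x hx; rewrite -E // E1.
Qed.

End Main.

Theorem mainTheorem16 (R : comUnitRingType) (n : nat) (P A : 'M[R]_n)
  (alpha : 'rV[R]_n -> 'rV[R]_n) :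
  (2%:R : R) \is a GRing.unit ->
  quad_space P A ->
  TransO P A alpha ->
  exists beta : 'rV[{poly R}]_n -> 'rV[{poly R}]_n,
    [/\ TransO (polyX_mx P) (polyX_mx A) beta,
        (forall x, inM P x -> specialize beta 1 x = alpha x) &
        (forall x, inM P x -> specialize beta 0 x = x)].
Proof.
move=> _ _ /key [B [Bi [TB _ _ E1 E0]]].
exists (fun y => y *m B); split => // x hx; rewrite specE; [exact: E1 | exact: E0].
Qed.
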